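(* For every integer $n\ge1$, \[ (3n-1)\,x\,p_{n-1}(x)=2n\,q_n(x)+(2n-1)\,q_{n-1}(x), \] and for every integer $n\ge2$, \[ (3n-2)\,x\,q_{n-1}(x)=\tfrac23\bigl(n\,p_n(x)+(2n-1)\,p_{n-1}(x)+(n-1)\,p_{n-2}(x)\bigr). \]
   Context: Pochhammer symbol: $(a)_0=1$, $(a)_n=a(a+1)\cdots(a+n-1)$; for real $a$ and integer $n\ge0$, $\binom{n+a}{n}:=\frac{(a+1)_n}{n!}$. Define $p_n(x)=\sum_{k=0}^n\binom nk\binom{n+\frac k2}{n}(-1)^{n-k}x^k$ and $q_n(x)=\sum_{k=0}^n\binom nk\binom{n+\frac{k-1}2}{n}(-1)^{n-k}x^k$. *)

(* Defs.v *)
From HB Require Import structures.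
From mathcomp Require Import all_boot all_order all_algebra.
Set Implicit Arguments. Unset Strict Implicit. Unset Printing Implicit Defensive.
Import Order.TTheory GRing.Theory Num.Theory.
Local Open Scope ring_scope.

Definition poch (a : rat) (n : nat) : rat := \prod_(i < n) (a + i%:R).

(* Generalized binomial: binom(n + a, n) := (a+1)_n / n!. *)
Definition gbinom (n : nat) (a : rat) : rat := poch (a + 1) n / (n`!)%:R.

Definition p_poly (n : nat) : {poly rat} :=
  \sum_(k < n.+1) ((('C(n, k))%:R * gbinom n (k%:R / 2) * (-1) ^+ (n - k)) *: 'X^k).

Definition q_poly (n : nat) : {poly rat} :=
  \sum_(k < n.+1) ((('C(n, k))%:R * gbinom n ((k%:R - 1) / 2) * (-1) ^+ (n - k)) *: 'X^k).

(* Main.v *)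
Require Import Defs.
From HB Require Import structures.
From mathcomp Require Import all_boot all_order all_algebra.
From mathcomp Require Import ring zify.
Import GRing.Theory Num.Theory.
Local Open Scope ring_scope.

Definition A (n k : nat) : rat :=
  ('C(n, k))%:R * gbinom n (k%:R / 2) * (-1) ^+ (n - k).
Definition B (n k : nat) : rat :=
  ('C(n, k))%:R * gbinom n ((k%:R - 1) / 2) * (-1) ^+ (n - k).

Lemma coefp n i : (p_poly n)`_i = A n i.
Proof.
rewrite /p_poly -(poly_def _ (fun k => ('C(n, k))%:R * gbinom n (k%:R / 2) * (-1) ^+ (n - k))) coef_poly.
by case: ltnP => // H; rewrite /A bin_small // !mul0r.
Qed.

Lemma coefq n i : (q_poly n)`_i = B n i.
Proof.
rewrite /q_poly -(poly_def _ (fun k => ('C(n, k))%:R * gbinom n ((k%:R - 1) / 2) * (-1) ^+ (n - k))) coef_poly.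
by case: ltnP => // H; rewrite /B bin_small // !mul0r.
Qed.

Lemma pochS a n : poch a n.+1 = poch a n * (a + n%:R).
Proof. by rewrite /poch big_ord_recr. Qed.

Lemma pochSl a n : poch a n.+1 = a * poch (a + 1) n.
Proof.
rewrite /poch big_ord_recl /= addr0; congr (_ * _); apply: eq_bigr => i _.
by rewrite /bump /= -nat1r addrA.
Qed.

Lemma sgn1 N i (g : rat) :
  ('C(N, i.+1))%:R * g * (-1) ^+ (N - i.+1) = - (('C(N, i.+1))%:R * g * (-1) ^+ (N - i)).
Proof.
case: (ltnP i N) => h.
  by rewrite -(subnSK h) exprS mulN1r !mulrN opprK.
by rewrite bin_small ?ltnS // !mul0r oppr0.
Qed.

Lemma sgn2 N i (g : rat) :
  ('C(N, i.+1))%:R * g * (-1) ^+ (N.+1 - i) = - (('C(N, i.+1))%:R * g * (-1) ^+ (N - i)).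
Proof.
case: (ltnP i N) => h.
  by rewrite (subSn (ltnW h)) exprS mulN1r !mulrN.
by rewrite bin_small ?ltnS // !mul0r oppr0.
Qed.

Lemma binrel N i : (i.+1)%:R * ('C(N, i.+1))%:R = (N%:R - i%:R) * ('C(N, i))%:R :> rat.
Proof.
case: (leqP i N) => h.
  by rewrite -natrM mul_bin_left natrM natrB.
by rewrite (bin_small h) (@bin_small N i.+1 (ltnW h)) !mulr0n !mulr0.
Qed.

Lemma binrel2 m j : (m.+1)%:R * ('C(m, j.+1))%:R = (m%:R - j%:R) * ('C(m.+1, j.+1))%:R :> rat.
Proof.
case: (leqP j m) => h.
  by rewrite -natrM (mul_bin_down m.+1) subSS natrM natrB.
by rewrite (@bin_small m j.+1 (ltnW h)) (@bin_small m.+1 j.+1 h) !mulr0n !mulr0.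
Qed.

Lemma part1 m : (3 * m.+1 - 1)%N%:R *: ('X * p_poly m)
  = (2 * m.+1)%N%:R *: q_poly m.+1 + (2 * m.+1 - 1)%N%:R *: q_poly m :> {poly rat}.
Proof.
have -> : (3 * m.+1 - 1 = 3 * m + 2)%N by lia.
have -> : (2 * m.+1 - 1 = 2 * m + 1)%N by lia.
have hF : (m`!)%:R != 0 :> rat by rewrite pnatr_eq0 -lt0n fact_gt0.
apply/polyP => i; rewrite coefD !coefZ coefXM !coefp !coefq.
case: i => [|j] /=.
  rewrite mulr0 /B !bin0 /gbinom pochS factS !subn0 exprS !natrM.
  set P := poch _ m; set F := (m`!)%:R; set s := (-1) ^+ m.
  by field; rewrite hF nat1r pnatr_eq0.
rewrite /A /B (sgn1 m j) subSS.
rewrite (_ : ((j.+1)%:R - 1)/2 = j%:R/2 :> rat); last by rewrite -natr1 addrK.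
rewrite binS !natrD.
have H1 : ('C(m, j.+1))%:R = (m%:R - j%:R) * ('C(m, j))%:R / (j.+1)%:R :> rat.
  by rewrite -binrel mulrAC divff ?mul1r // pnatr_eq0.
rewrite H1 /gbinom pochS factS !natrM.
set P := poch _ m; set F := (m`!)%:R; set s := (-1) ^+ (m - j); set c := ('C(m, j))%:R.
by field; rewrite hF !nat1r !pnatr_eq0.
Qed.

Lemma part2 m : (3 * m.+2 - 2)%N%:R *: ('X * q_poly m.+1)
  = (2%:R / 3%:R) *: ((m.+2)%:R *: p_poly m.+2 + (2 * m.+2 - 1)%N%:R *: p_poly m.+1
                      + (m.+2 - 1)%N%:R *: p_poly m) :> {poly rat}.
Proof.
have -> : (3 * m.+2 - 2 = 3 * m + 4)%N by lia.
have -> : (2 * m.+2 - 1 = 2 * m + 3)%N by lia.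
have -> : (m.+2 - 1 = m + 1)%N by lia.
have hF : (m`!)%:R != 0 :> rat by rewrite pnatr_eq0 -lt0n fact_gt0.
apply/polyP => i; rewrite !coefZ !coefD coefXM !coefZ !coefp coefq.
case: i => [|j] /=.
  rewrite mulr0 /A !bin0 /gbinom !pochS !factS !subn0 !exprS !natrM.
  set P := poch _ m; set F := (m`!)%:R; set s := (-1) ^+ m.
  by field; rewrite hF !nat1r -?natrD !pnatr_eq0.
rewrite /A /B (sgn1 m.+1 j) (sgn1 m j) -(sgn2 m j) !subSS /gbinom.
rewrite (_ : (j%:R - 1)/2 + 1 = j.+1%:R/2 :> rat); last first.
  by rewrite -natr1; field.
rewrite (binS m.+1 j) (natrD _ 'C(m.+1, j.+1) 'C(m.+1, j)).
have H3 := binrel2 m j.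
have H2 := binrel m.+1 j.
rewrite (_ : ('C(m, j.+1))%:R = (m%:R - j%:R) * ('C(m.+1, j.+1))%:R / (m.+1)%:R); last first.
  by rewrite -H3 mulrAC divff ?mul1r // pnatr_eq0.
rewrite (_ : ('C(m.+1, j.+1))%:R = ((m.+1)%:R - j%:R) * ('C(m.+1, j))%:R / (j.+1)%:R); last first.
  by rewrite -H2 mulrAC divff ?mul1r // pnatr_eq0.
rewrite pochSl !pochS !factS !natrM.
set P := poch _ m; set F := (m`!)%:R; set s := (-1) ^+ (m.+1 - j); set c := ('C(m.+1, j))%:R.
by field; rewrite hF !nat1r -?natrD !pnatr_eq0.
Qed.

Theorem mainTheorem8 :
  (forall n : nat, (1 <= n)%N ->
     ((3 * n - 1)%N%:R *: ('X * p_poly n.-1)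
      = (2 * n)%N%:R *: q_poly n + (2 * n - 1)%N%:R *: q_poly n.-1 :> {poly rat}))
  /\
  (forall n : nat, (2 <= n)%N ->
     ((3 * n - 2)%N%:R *: ('X * q_poly n.-1)
      = (2%:R / 3%:R) *: (n%:R *: p_poly n + (2 * n - 1)%N%:R *: p_poly n.-1
                          + (n - 1)%N%:R *: p_poly n.-2) :> {poly rat})).
Proof.
split.
  by case=> // m _; exact: part1.
by case=> [|[|m]] // _; exact: part2.
Qed.
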